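(* Assume $e_{-1}+e_{+1}<1$. For any two measurable classifiers $f,g:\mathcal X\to\{-1,+1\}$, $$\mathbb E_{\tilde{\mathcal D}}[\mathbb 1_{\mathrm{peer}}(f(X),\tilde Y)]\le\mathbb E_{\tilde{\mathcal D}}[\mathbb 1_{\mathrm{peer}}(g(X),\tilde Y)]\iff R_{-1}(f)+R_{+1}(f)\le R_{-1}(g)+R_{+1}(g),$$ i.e. minimizing $\mathbb E_{\tilde{\mathcal D}}[\mathbb 1_{\mathrm{peer}}(f(X),\tilde Y)]$ is equivalent to minimizing $R_{-1}(f)+R_{+1}(f)$.
   Context: Let $\mathcal X\subseteq\mathbb R^d$ and let $(X,Y)$ be a random pair with distribution $\mathcal D$ on $\mathcal X\times\{-1,+1\}$, with $p:=\mathbb P(Y=+1)\in(0,1)$. A noisy label $\tilde Y\in\{-1,+1\}$ is generated with noise rates $e_{+1}:=\mathbb P(\tilde Y=-1\mid Y=+1)$, $e_{-1}:=\mathbb P(\tilde Y=+1\mid Y=-1)$, where $\tilde Y$ is conditionally independent of $X$ given $Y$; $\tilde{\mathcal D}$ is the distribution of $(X,\tilde Y)$. For a classifier $f$, $R_{+1}(f):=\mathbb P(f(X)=-1\mid Y=+1)$ and $R_{-1}(f):=\mathbb P(f(X)=+1\mid Y=-1)$. The 0-1 loss is $\mathbb 1(a,b)=1$ if $a\neq b$ and $0$ otherwise, and $$\mathbb E_{\tilde{\mathcal D}}[\mathbb 1_{\mathrm{peer}}(f(X),\tilde Y)]:=\mathbb E[\mathbb 1(f(X),\tilde Y)]-\mathbb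 E[\mathbb 1(f(X_1),\tilde Y_2)],$$ where $(X,\tilde Y),(X_1,\tilde Y_1),(X_2,\tilde Y_2)$ are i.i.d. draws from $\tilde{\mathcal D}$. *)

(* Defs.v *)
From HB Require Import structures.
From mathcomp Require Import all_boot all_order all_algebra.
From mathcomp Require Import all_classical all_reals all_analysis.
Set Implicit Arguments. Unset Strict Implicit. Unset Printing Implicit Defensive.
Import Order.TTheory GRing.Theory Num.Theory.
Local Open Scope classical_set_scope.
Local Open Scope ring_scope.

(* Labels {-1,+1} are encoded as bool: true = +1, false = -1. *)

Section peer.
Context {R : realType} {d : measure_display} {T : measurableType d}.
Variable (P : probability T R).

Definition Pr (A : set T) : R := fine (P A).

Definition cond_pr (A B : set T) : R := Pr (A `&` B) / Pr B.

Variables (n : nat) (X : T -> n.-tuple R) (Y Yt : T -> bool).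

Definition e_pos : R := cond_pr [set w | Yt w = false] [set w | Y w = true].
Definition e_neg : R := cond_pr [set w | Yt w = true] [set w | Y w = false].

Definition R_pos (f : n.-tuple R -> bool) : R :=
  cond_pr [set w | f (X w) = false] [set w | Y w = true].
Definition R_neg (f : n.-tuple R -> bool) : R :=
  cond_pr [set w | f (X w) = true] [set w | Y w = false].

Definition loss01 (a b : bool) : R := (a != b)%:R.

(* E_{D~}[1_peer(f(X), Yt)] = E[1(f(X),Yt)] - E[1(f(X_1),Yt_2)],
   where (X_1,Yt_1),(X_2,Yt_2) are independent draws from D~, realised as
   two coordinates of the product probability space (T*T, P \x P). *)
Definition peer_risk (f : n.-tuple R -> bool) : R :=
  fine (\int[P]_w (loss01 (f (X w)) (Yt w))%:E)
  - fine (\int[(P \x P)%E]_w (loss01 (f (X w.1)) (Yt w.2))%:E).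

Definition cond_indep_given_Y : Prop :=
  forall (A : set (n.-tuple R)) (y yt : bool), measurable A ->
    (P (X @^-1` A `&` [set w | Y w = y] `&` [set w | Yt w = yt])
       * P [set w | Y w = y]
     = P (X @^-1` A `&` [set w | Y w = y])
       * P ([set w | Y w = y] `&` [set w | Yt w = yt]))%E.

End peer.

(* Main.v *)
Require Import Defs.
From HB Require Import structures.
From mathcomp Require Import all_boot all_order all_algebra.
From mathcomp Require Import all_classical all_reals all_analysis.
From mathcomp Require Import ring lra.
Import Order.TTheory GRing.Theory Num.Theory.
Local Open Scope classical_set_scope.
Local Open Scope ring_scope.

Ltac bcase f := repeat match goal with |- context[f ?x] => destruct (f x) end.
Ltac sets := cbv [setI setC setU setX preimage set1 set0]; simpl.
Ltac bdec := repeat (match goal with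
 | H : false = true |- _ => discriminate H
 | H : true = false |- _ => discriminate H
 | H : is_true false |- _ => discriminate H
 | H : False |- _ => destruct H
 | H : _ /\ _ |- _ => destruct H
 | H : _ \/ _ |- _ => destruct H
 | H : ~ (true = true) |- _ => exfalso; apply H; reflexivity
 | H : ~ (false = false) |- _ => exfalso; apply H; reflexivity
 | |- _ /\ _ => split
 | |- ~ _ => intro
 | |- _ -> _ => intro
 | |- true = true => reflexivity
 | |- false = false => reflexivity
 | |- is_true _ => solve [done]
 | H : is_true _ |- _ => solve [by move: H]
 | |- _ \/ _ => first [left; solve [bdec] | right; solve [bdec]]
 end).

Lemma in_setb (U : Type) (p : U -> bool) x : (x \in [set y | p y]) = p x.
Proof. apply/idP/idP => H; [exact: set_mem H| exact: mem_set]. Qed.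

Section H.
Context (R : realType) (d : measure_display) (T : measurableType d) (P : probability T R).

Lemma PrE A : measurable A -> P A = (Pr P A)%:E.
Proof. by move=> mA; rewrite /Pr fineK // fin_num_measure. Qed.

Lemma PrT : Pr P setT = 1.
Proof. by rewrite /Pr probability_setT. Qed.

Lemma Pr_split A B : measurable A -> measurable B ->
  Pr P A = Pr P (A `&` B) + Pr P (A `&` ~` B).
Proof.
move=> mA mB.
have mAB : measurable (A `&` B) by exact: measurableI.
have mAC : measurable (A `&` ~` B) by apply: measurableI => //; exact: measurableC.
apply: EFin_inj; rewrite EFinD -!PrE // -measureU //.
  by rewrite -setIUr setUCr setIT.
by rewrite setIACA setICr setI0.
Qed.

Ltac bb b Y Yt := sets; bcase b; bcase Y; bcase Yt; bdec.

Lemma key (b Y Yt : T -> bool) :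
  (forall c, measurable [set w | b w = c]) ->
  (forall c, measurable [set w | Y w = c]) ->
  (forall c, measurable [set w | Yt w = c]) ->
  0 < Pr P [set w | Y w = true] < 1 ->
  (forall y, P ([set w | b w = true] `&` [set w | Y w = y] `&` [set w | Yt w = true])
       * P [set w | Y w = y]
     = P ([set w | b w = true] `&` [set w | Y w = y])
       * P ([set w | Y w = y] `&` [set w | Yt w = true]))%E ->
  fine (\int[P]_w (loss01 (b w) (Yt w))%:E)
  - fine (\int[(P \x P)%E]_w (loss01 (b w.1) (Yt w.2))%:E)
  = - 2 * (Pr P [set w | Y w = true] * (1 - Pr P [set w | Y w = true])
      * (1 - cond_pr P [set w | Yt w = true] [set w | Y w = false]
           - cond_pr P [set w | Yt w = false] [set w | Y w = true]))
    * (1 - cond_pr P [set w | b w = true] [set w | Y w = false]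
         - cond_pr P [set w | b w = false] [set w | Y w = true]).
Proof.
move=> mb mY mYt /andP[p0 p1] CI.
set B1 := [set w | b w = true]; set B0 := [set w | b w = false].
set Y1 := [set w | Y w = true]; set Y0 := [set w | Y w = false].
set T1 := [set w | Yt w = true]; set T0 := [set w | Yt w = false].
have mB1 := mb true; have mB0 := mb false; have mY1 := mY true; have mY0 := mY false.
have mT1 := mYt true; have mT0 := mYt false.
have E1 : fine (\int[P]_w (loss01 (b w) (Yt w))%:E)
          = Pr P (B1 `&` T0) + Pr P (B0 `&` T1).
  have mS : measurable [set w | b w != Yt w].
    have -> : [set w | b w != Yt w] = (B1 `&` T0) `|` (B0 `&` T1).
      by apply/seteqP; split => w; rewrite /B1 /T0 /B0 /T1; bb b Y Yt.
    by apply: measurableU; apply: measurableI.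
  rewrite (_ : (fun w => _) = (fun w => (\1_[set w | b w != Yt w] w)%:E)); last first.
    apply/funext => w; by rewrite indicE /loss01 in_setb.
  rewrite integral_indic // setIT.
  have -> : [set w | b w != Yt w] = (B1 `&` T0) `|` (B0 `&` T1).
    by apply/seteqP; split => w; rewrite /B1 /T0 /B0 /T1; bb b Y Yt.
  rewrite measureU //; first by rewrite /Pr -fineD ?fin_num_measure //; apply: measurableI.
  - by apply: measurableI.
  - by apply: measurableI.
  by apply/seteqP; split => w; rewrite /B1 /T0 /B0 /T1; bb b Y Yt.
have E2 : fine (\int[(P \x P)%E]_w (loss01 (b w.1) (Yt w.2))%:E)
          = Pr P B1 * Pr P T0 + Pr P B0 * Pr P T1.
  have eS : [set w : T * T | b w.1 != Yt w.2] = (B1 `*` T0) `|` (B0 `*` T1).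
    by apply/seteqP; split => -[w1 w2]; rewrite /B1 /T0 /B0 /T1; sets; bcase b; bcase Yt; bdec.
  have mS : measurable [set w : T * T | b w.1 != Yt w.2].
    by rewrite eS; apply: measurableU; apply: measurableX.
  rewrite (_ : (fun w => _) = (fun w => (\1_[set w : T * T | b w.1 != Yt w.2] w)%:E)); last first.
    apply/funext => w; by rewrite indicE /loss01 in_setb.
  rewrite integral_indic // setIT eS.
  rewrite measureU //.
    transitivity (fine ((Pr P B1 * Pr P T0)%:E + (Pr P B0 * Pr P T1)%:E)); last by [].
    by congr (fine (_ + _)); rewrite EFinM -!PrE //; exact: product_measure1E.
  - by apply: measurableX.
  - by apply: measurableX.
  by apply/seteqP; split => -[w1 w2]; rewrite /B1 /T0 /B0 /T1; sets; bcase b; bcase Yt; bdec.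
have spl A (h : T -> bool) : measurable A -> measurable [set w | h w = true] ->
    Pr P A = Pr P (A `&` [set w | h w = true]) + Pr P (A `&` [set w | h w = false]).
  move=> mA mh; rewrite (@Pr_split A _ mA mh); congr (_ + Pr P (A `&` _)).
  by apply/seteqP; split => w; sets; bcase h; bdec.
have PB0 : Pr P B0 = 1 - Pr P B1.
  by rewrite -PrT (spl setT b) // !setTI addrC addKr.
have PT0 : Pr P T0 = 1 - Pr P T1.
  by rewrite -PrT (spl setT Yt) // !setTI addrC addKr.
have PY0 : Pr P Y0 = 1 - Pr P Y1.
  by rewrite -PrT (spl setT Y) // !setTI addrC addKr.
have hB1T0 : Pr P (B1 `&` T0) = Pr P B1 - Pr P (B1 `&` T1).
  by rewrite (spl B1 Yt) //; lra.
have hB0T1 : Pr P (B0 `&` T1) = Pr P T1 - Pr P (B1 `&` T1).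
  by rewrite (spl T1 b) // (setIC T1 B1) (setIC T1 B0); lra.
have hPB1 : Pr P B1 = Pr P (B1 `&` Y1) + Pr P (B1 `&` Y0) by rewrite (spl B1 Y).
have hPT1 : Pr P T1 = Pr P (Y1 `&` T1) + Pr P (Y0 `&` T1).
  by rewrite (spl T1 Y) // (setIC T1 Y1) (setIC T1 Y0).
have hB1T1 : Pr P (B1 `&` T1) = Pr P (B1 `&` Y1 `&` T1) + Pr P (B1 `&` Y0 `&` T1).
  by rewrite (spl (B1 `&` T1) Y) ?(setIAC B1 T1) //; apply: measurableI.
have hT0Y1 : Pr P (T0 `&` Y1) = Pr P Y1 - Pr P (Y1 `&` T1).
  by rewrite (spl Y1 Yt) // (setIC Y1 T0); lra.
have hB0Y1 : Pr P (B0 `&` Y1) = Pr P Y1 - Pr P (B1 `&` Y1).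
  by rewrite (spl Y1 b) // (setIC Y1 B1) (setIC Y1 B0); lra.
have CI1 : Pr P (B1 `&` Y1 `&` T1) * Pr P Y1 = Pr P (B1 `&` Y1) * Pr P (Y1 `&` T1).
  apply: EFin_inj; rewrite !EFinM -!PrE //; first exact: (CI true);
  repeat apply: measurableI; first [exact: mB1 | exact: mY1 | exact: mY0 | exact: mT1].
have CI0 : Pr P (B1 `&` Y0 `&` T1) * Pr P Y0 = Pr P (B1 `&` Y0) * Pr P (Y0 `&` T1).
  apply: EFin_inj; rewrite !EFinM -!PrE //; first exact: (CI false);
  repeat apply: measurableI; first [exact: mB1 | exact: mY1 | exact: mY0 | exact: mT1].
rewrite E1 E2 /cond_pr hB1T0 hB0T1 PB0 PT0 hT0Y1 hB0Y1 (setIC T1 Y0) hB1T1.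
rewrite PY0 in CI0 *.
rewrite hPB1 hPT1.
move: CI1 CI0 p0 p1.
move: (Pr P (B1 `&` Y1 `&` T1)) (Pr P (B1 `&` Y0 `&` T1)) (Pr P (B1 `&` Y1)) (Pr P (B1 `&` Y0))
  (Pr P (Y1 `&` T1)) (Pr P (Y0 `&` T1)) (Pr P Y1) => d1 d0 u1 u0 c1 c0 p CI1 CI0 p0 p1.
have pn0 : p != 0 by rewrite gt_eqF.
have qn0 : 1 - p != 0 by rewrite subr_eq0 eq_sym lt_eqF.
have -> : d1 = u1 * c1 / p by rewrite -CI1 mulfK.
have -> : d0 = u0 * c0 / (1 - p) by rewrite -CI0 mulfK.
field.
by rewrite pn0 qn0.
Qed.

End H.

Theorem lemma3 (R : realType) (dT : measure_display) (T : measurableType dT)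
  (P : probability T R) (n : nat) (Xs : set (n.-tuple R))
  (X : T -> n.-tuple R) (Y Yt : T -> bool) :
  measurable Xs ->
  (forall w, Xs (X w)) ->
  measurable_fun setT X -> measurable_fun setT Y -> measurable_fun setT Yt ->
  0 < Pr P [set w | Y w = true] < 1 ->
  cond_indep_given_Y P X Y Yt ->
  e_neg P Y Yt + e_pos P Y Yt < 1 ->
  forall f g : n.-tuple R -> bool,
    measurable_fun Xs f -> measurable_fun Xs g ->
    (peer_risk P X Yt f <= peer_risk P X Yt g <->
     R_neg P X Y f + R_pos P X Y f <= R_neg P X Y g + R_pos P X Y g).
Proof.
move=> mXs hXs mX mY mYt hp CI he f g mf mg.
have mB (h : T -> bool) c : measurable_fun setT h -> measurable [set w | h w = c].
  by move=> mh; have := mh measurableT [set c] I; rewrite setTI.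
have pre (k : n.-tuple R -> bool) c :
    X @^-1` (Xs `&` k @^-1` [set c]) = [set w | k (X w) = c].
  by apply/seteqP; split => w; sets; [case | move=> H; split; [exact: hXs|]].
have mF (k : n.-tuple R -> bool) c : measurable_fun Xs k -> measurable [set w | k (X w) = c].
  move=> mk; rewrite -pre; have := mX measurableT _ (mk mXs [set c] I).
  by rewrite setTI.
have K (k : n.-tuple R -> bool) : measurable_fun Xs k ->
   peer_risk P X Yt k = - 2 * (Pr P [set w | Y w = true] * (1 - Pr P [set w | Y w = true])
      * (1 - e_neg P Y Yt - e_pos P Y Yt)) * (1 - R_neg P X Y k - R_pos P X Y k).
  move=> mk; rewrite /peer_risk.
  apply: (@key R dT T P (fun w => k (X w)) Y Yt) => //.
  - by move=> c; apply: mF.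
  - by move=> c; apply: mB.
  - by move=> c; apply: mB.
  move=> y; rewrite -pre; exact: (CI _ y true (mk mXs [set true] I)).
rewrite (K f mf) (K g mg).
have Kp : 0 < Pr P [set w | Y w = true] * (1 - Pr P [set w | Y w = true])
      * (1 - e_neg P Y Yt - e_pos P Y Yt).
  case/andP: hp => h0 h1; rewrite !mulr_gt0 //; lra.
move: Kp; set k := _ * _ * _ => Kp.
split => H; nra.
Qed.
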